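(* Let $f: X \to Y$ be a continuous surjection which is open, closed and finite-to-one (each fiber $f^{-1}(y)$ is finite), where $Y$ is set strongly star Hurewicz. Then $X$ is nearly set strongly star Hurewicz.
   Context: For a subset $A$ of a space $X$ and a collection $\mathcal{U}$ of subsets of $X$, ${\rm St}(A,\mathcal{U}) = \bigcup\{U \in \mathcal{U}: U \cap A \neq \emptyset\}$. A space $Y$ is set strongly star Hurewicz if for each nonempty $B \subset Y$ and each sequence $(\mathcal{V}_n: n\in\mathbb{N})$ of collections of sets open in $Y$ with $\overline{B} \subset \bigcup\mathcal{V}_n$ for all $n$, there are finite sets $F_n \subset \overline{B}$ such that each $y \in B$ lies in ${\rm St}(F_n,\mathcal{V}_n)$ for all but finitely many $n$. A space $X$ is nearly set strongly star Hurewicz if for each nonempty $A \subset X$ and each sequence $(\mathcal{U}_n: n \in \mathbb{N})$ of open covers of $X$ there is a sequence $(F_n: n\in\mathbb{N})$ of finite subsets of $X$ such that each $x \in A$ lies in ${\rm St}(F_n,\mathcal{U}_n)$ for all but finitely many $n$. *)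

(* Defs.v *)
From HB Require Import structures.
From mathcomp Require Import all_boot all_order all_algebra.
From mathcomp Require Import all_classical all_reals topology.
Set Implicit Arguments. Unset Strict Implicit. Unset Printing Implicit Defensive.
Local Open Scope classical_set_scope.

Definition St {T : Type} (A : set T) (U : set (set T)) : set T :=
  [set x | exists2 V, U V & (V `&` A !=set0) /\ V x].

Definition set_strongly_star_Hurewicz (Y : topologicalType) : Prop :=
  forall (B : set Y), B !=set0 ->
  forall (V : nat -> set (set Y)),
    (forall n, (forall W, V n W -> open W) /\ closure B `<=` \bigcup_(W in V n) W) ->
    exists F : nat -> set Y,
      (forall n, finite_set (F n) /\ F n `<=` closure B) /\
      (forall y, B y -> exists N : nat, forall n, (N <= n)%N -> St (F n) (V n) y).

Definition nearly_set_strongly_star_Hurewicz (X : topologicalType) : Prop :=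
  forall (A : set X), A !=set0 ->
  forall (U : nat -> set (set X)),
    (forall n, (forall W, U n W -> open W) /\ [set: X] `<=` \bigcup_(W in U n) W) ->
    exists F : nat -> set X,
      (forall n, finite_set (F n)) /\
      (forall x, A x -> exists N : nat, forall n, (N <= n)%N -> St (F n) (U n) x).

(* Main.v *)
Require Import Defs.
From HB Require Import structures.
From mathcomp Require Import all_boot all_order all_algebra.
From mathcomp Require Import all_classical all_reals topology.
Local Open Scope classical_set_scope.

Lemma open_seqcap (T : topologicalType) (I : eqType) (s : seq I) (g : I -> set T) :
  (forall i, open (g i)) -> open [set y | forall i, i \in s -> g i y].
Proof.
move=> og; elim: s => [|a s IH].
  have -> : [set y : T | forall i, i \in [::] -> g i y] = setT.
    by apply/seteqP; split => // y _ i.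
  exact: openT.
have -> : [set y | forall i, i \in a :: s -> g i y] =
  g a `&` [set y | forall i, i \in s -> g i y].
  apply/seteqP; split => y /=.
    by move=> H; split; [apply: H; rewrite inE eqxx | move=> i iS; apply: H; rewrite inE iS orbT].
  by move=> [ga H] i; rewrite inE => /orP [/eqP -> //| /H].
exact: openI.
Qed.

Theorem theorem3p14 (X Y : topologicalType) (f : X -> Y) :
  continuous f ->
  (forall y : Y, exists x : X, f x = y) ->
  (forall U : set X, open U -> open (f @` U)) ->
  (forall C : set X, closed C -> closed (f @` C)) ->
  (forall y : Y, finite_set (f @^-1` [set y])) ->
  set_strongly_star_Hurewicz Y ->
  nearly_set_strongly_star_Hurewicz X.
Proof.
move=> _ _ fop fcl ffin HY A A0 U HU.
have [c Hc] : {c : nat -> X -> set X & forall n x, U n (c n x) /\ c n x x}.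
  have H1 : forall n, exists g : X -> set X, forall x, U n (g x) /\ g x x.
    move=> n; have [_ cov] := HU n.
    have : forall x, exists W, U n W /\ W x.
      by move=> x; have [W ? ?] := cov x I; exists W.
    by move=> /choice [g Hg]; exists g.
  have [c Hc] := choice H1; by exists c.
have [s Hs] : {s : Y -> seq X & forall z, f @^-1` [set z] = [set` s z]}.
  have H2 : forall z, exists s0 : seq X, f @^-1` [set z] = [set` s0].
    by move=> z; exact/finite_seqP.
  have [s Hs] := choice H2; by exists s.
pose W n z := [set y | forall x, x \in s z -> (f @` c n x) y] `&`
  ~` (f @` ~` (\bigcup_(x in [set` s z]) c n x)).
have HV : forall n, (forall V, range (W n) V -> open V) /\
    closure (f @` A) `<=` \bigcup_(V in range (W n)) V.
  move=> n; split.
    move=> _ [z _ <-]; apply: openI.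
      by apply: open_seqcap => x; apply: fop; have [Ux _] := Hc n x; exact: (proj1 (HU n)).
    apply: closed_openC; apply: fcl; apply: open_closedC.
    apply: bigcup_open => x _; have [Ux _] := Hc n x; exact: (proj1 (HU n)).
  move=> z _; exists (W n z); first by exists z.
  split.
    move=> x xs; exists x; first by have [_ ?] := Hc n x.
    have : [set` s z] x by [].
    by rewrite -Hs.
  move=> [x nx fxz]; apply: nx; exists x; last by have [_ ?] := Hc n x.
  by have : (f @^-1` [set z]) x by []; rewrite Hs.
have [F [Ffin HF]] := HY (f @` A) (image_nonempty f A0) _ HV.
exists (fun n => f @^-1` F n); split.
  move=> n; have -> : f @^-1` F n = \bigcup_(y in F n) f @^-1` [set y].
    by apply/seteqP; split => x /=; [move=> ?; exists (f x) | move=> [y Fy /= ->]].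
  by apply: bigcup_finite => //; have [] := Ffin n.
move=> x Ax; have [N HN] := HF (f x) (ex_intro2 _ _ x Ax erefl).
exists N => n /HN [_ [z _ <-]] [[y' [[Wy' _] Fy']] [_ Wfx]].
have : (\bigcup_(x0 in [set` s z]) c n x0) x.
  apply: contrapT => nx; apply: Wfx; by exists x.
move=> [x' xs cx]; exists (c n x'); first by have [] := Hc n x'.
split => //; have [x'' cx'' fx''] := Wy' x' xs.
by exists x''; split => //=; rewrite fx''.
Qed.
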